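(* Let $n\ge0$ and $k\ge1$ be integers and let $T$ be a completely non-unitary contraction on a separable infinite-dimensional complex Hilbert space $\mathcal{H}$ such that $\mathcal{D}_T\subseteq\mathcal{D}_{T^*}$, $\dim\mathcal{D}_{T^*}<\infty$, $\dim\mathcal{D}_T=n+1$ and $\dim(\mathcal{D}_{T^*}\ominus\mathcal{D}_T)=k$. Assume there is an orthonormal basis $\{e_m\}_{m\ge0}$ of $\mathcal{H}$ and scalars $a_{ij}$ ($0\le i\le n+k$, $0\le j\le n$) such that $Te_j=\sum_{i=0}^{n+k}a_{ij}e_i$ for $0\le j\le n$ and $Te_j=e_{j+k}$ for $j\ge n+1$. Let $A_1=(a_{ij})_{0\le i,j\le n}$. Then $T$ has no non-zero eigenvalue if and only if for every eigenvector $(h_0,\dots,h_n)\in\mathbb{C}^{n+1}$ of $A_1$ corresponding to a non-zero eigenvalue, there exists $l\in\{1,\dots,k\}$ with $\sum_{r=0}^{n}a_{n+l,r}h_r\neq 0$.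
   Context: For a contraction $T$ on $\mathcal{H}$, $\mathcal{D}_T=\overline{(I-T^*T)^{1/2}\mathcal{H}}$ and $\mathcal{D}_{T^*}=\overline{(I-TT^* )^{1/2}\mathcal{H}}$. A contraction is completely non-unitary if it has no nonzero reducing subspace on which it is unitary. *)

(* Defs.v *)
From HB Require Import structures.
From mathcomp Require Import all_boot all_order all_algebra.
From mathcomp Require Import complex.
From mathcomp Require Import reals.
Set Implicit Arguments. Unset Strict Implicit. Unset Printing Implicit Defensive.
Import Order.TTheory GRing.Theory Num.Theory.
Local Open Scope ring_scope.

Section Hilbert.
Variables (R : realType) (V : lmodType R[i]) (ip : V -> V -> R[i]).

Definition hnorm (x : V) : R[i] := sqrtC (ip x x).

Definition is_inner_product : Prop :=
  [/\ forall (c : R[i]) (x y z : V), ip (c *: x + y) z = c * ip x z + ip y z,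
      forall x y : V, ip x y = Num.conj (ip y x),
      forall x : V, 0 <= ip x x
    & forall x : V, ip x x = 0 -> x = 0].

Definition cauchy_seq (u : nat -> V) : Prop :=
  forall eps : R[i], 0 < eps -> exists N : nat,
    forall p q : nat, (N <= p)%N -> (N <= q)%N -> hnorm (u p - u q) < eps.

Definition converges_to (u : nat -> V) (l : V) : Prop :=
  forall eps : R[i], 0 < eps -> exists N : nat,
    forall p : nat, (N <= p)%N -> hnorm (u p - l) < eps.

Definition is_hilbert : Prop :=
  is_inner_product /\
  forall u : nat -> V, cauchy_seq u -> exists l : V, converges_to u l.

Definition hclosure (A : V -> Prop) : V -> Prop :=
  fun x => forall eps : R[i], 0 < eps -> exists y : V, A y /\ hnorm (x - y) < eps.

Definition closed_subspace (M : V -> Prop) : Prop :=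
  [/\ M 0,
      forall (c : R[i]) (x y : V), M x -> M y -> M (c *: x + y)
    & forall x : V, hclosure M x -> M x].

Definition is_onb (e : nat -> V) : Prop :=
  (forall i j : nat, ip (e i) (e j) = (i == j)%:R) /\
  (forall x : V, (forall m : nat, ip x (e m) = 0) -> x = 0).

Definition is_adjoint (T Ts : V -> V) : Prop :=
  forall x y : V, ip (T x) y = ip x (Ts y).

Definition contraction (T : V -> V) : Prop :=
  forall x : V, hnorm (T x) <= hnorm x.

Definition is_pos_sqrt (S P : V -> V) : Prop :=
  [/\ forall x y : V, ip (S x) y = ip x (S y),
      forall x : V, 0 <= ip (S x) x
    & forall x : V, S (S x) = P x].

Definition sqrt_range_closure (P : V -> V) : V -> Prop :=
  fun x => exists S : V -> V, is_pos_sqrt S P /\ hclosure (fun y => exists z, y = S z) x.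

Definition defect (T Ts : V -> V) : V -> Prop :=
  sqrt_range_closure (fun x => x - Ts (T x)).
Definition defect_adj (T Ts : V -> V) : V -> Prop :=
  sqrt_range_closure (fun x => x - T (Ts x)).

Definition has_dim (W : V -> Prop) (d : nat) : Prop :=
  exists f : 'I_d -> V,
    (forall c : 'I_d -> R[i], \sum_(i < d) c i *: f i = 0 -> forall i, c i = 0) /\
    (forall x : V, W x <-> exists c : 'I_d -> R[i], x = \sum_(i < d) c i *: f i).

Definition ominus (W2 W1 : V -> Prop) : V -> Prop :=
  fun x => W2 x /\ forall y : V, W1 y -> ip x y = 0.

Definition completely_non_unitary (T Ts : V -> V) : Prop :=
  forall M : V -> Prop, closed_subspace M ->
    (forall x, M x -> M (T x)) -> (forall x, M x -> M (Ts x)) ->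
    (forall x, M x -> Ts (T x) = x /\ T (Ts x) = x) ->
    forall x, M x -> x = 0.

End Hilbert.

Definition has_nonzero_eigenvalue (R : realType) (V : lmodType R[i]) (T : V -> V) : Prop :=
  exists (lambda : R[i]) (x : V), [/\ lambda != 0, x != 0 & T x = lambda *: x].

(* Main.v *)
Require Import Defs.
From HB Require Import structures.
From mathcomp Require Import all_boot all_order all_algebra.
From mathcomp Require Import complex.
From mathcomp Require Import reals.
From mathcomp Require Import zify.
From Stdlib Require Import Classical.
Set Implicit Arguments. Unset Strict Implicit.
Import Order.TTheory GRing.Theory Num.Theory.
Local Open Scope ring_scope.

Lemma ipZl (R : realType) (V : lmodType R[i]) (ip : V -> V -> R[i]) :
  is_inner_product ip -> forall c x z, ip (c *: x) z = c * ip x z.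
Proof.
case=> Hl _ _ _ c x z.
have H0 : ip 0 z = 0.
  have := Hl (-1) 0 0 z. by rewrite scaleN1r oppr0 addr0 mulN1r addNr.
by have := Hl c x 0 z; rewrite addr0 H0 addr0.
Qed.

Lemma ip0l (R : realType) (V : lmodType R[i]) (ip : V -> V -> R[i]) :
  is_inner_product ip -> forall z, ip 0 z = 0.
Proof. move=> H z; by rewrite -(scale0r (0 : V)) (ipZl H) mul0r. Qed.

Lemma ipDl (R : realType) (V : lmodType R[i]) (ip : V -> V -> R[i]) :
  is_inner_product ip -> forall x y z, ip (x + y) z = ip x z + ip y z.
Proof. move=> H x y z; case: (H) => Hl _ _ _; by rewrite -{1}(scale1r x) Hl mul1r. Qed.

Lemma ipBl (R : realType) (V : lmodType R[i]) (ip : V -> V -> R[i]) :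
  is_inner_product ip -> forall x y z, ip (x - y) z = ip x z - ip y z.
Proof. move=> H x y z; by rewrite (ipDl H) -scaleN1r (ipZl H) mulN1r. Qed.

Lemma ip_suml (R : realType) (V : lmodType R[i]) (ip : V -> V -> R[i]) :
  is_inner_product ip -> forall N (c : 'I_N -> R[i]) (f : 'I_N -> V) z,
  ip (\sum_(i < N) c i *: f i) z = \sum_(i < N) c i * ip (f i) z.
Proof.
move=> H; elim=> [|N IH] c f z; first by rewrite !big_ord0 (ip0l H).
by rewrite !big_ord_recr /= (ipDl H) (ipZl H) IH.
Qed.

Lemma ip_sumr (R : realType) (V : lmodType R[i]) (ip : V -> V -> R[i]) :
  is_inner_product ip -> forall N (c : 'I_N -> R[i]) (f : 'I_N -> V) z,
  ip z (\sum_(i < N) c i *: f i) = \sum_(i < N) (c i)^* * ip z (f i).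
Proof.
move=> H N c f z; case: (H) => _ Hc _ _.
rewrite Hc (ip_suml H) rmorph_sum; apply: eq_bigr => i _.
by rewrite rmorphM /= -Hc.
Qed.

Lemma ipZr (R : realType) (V : lmodType R[i]) (ip : V -> V -> R[i]) :
  is_inner_product ip -> forall c x z, ip z (c *: x) = c^* * ip z x.
Proof.
move=> H c x z; case: (H) => _ Hc _ _.
by rewrite Hc (ipZl H) rmorphM /= -Hc.
Qed.

Lemma sum_delta_ord (R : realType) N (F : 'I_N -> R[i]) (m : 'I_N) :
  \sum_(i < N) F i * ((i : nat) == m)%:R = F m.
Proof.
rewrite (bigD1 m) //= eqxx mulr1 big1 ?addr0 // => i /negbTE.
by rewrite -val_eqE /= => ->; rewrite mulr0.
Qed.

Lemma sum_delta_out (R : realType) N (F : 'I_N -> R[i]) (m : nat) :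
  (N <= m)%N -> \sum_(i < N) F i * ((i : nat) == m)%:R = 0.
Proof.
move=> hm; rewrite big1 // => i _.
have /negbTE -> : (i : nat) != m by apply/eqP => him; move: (ltn_ord i); lia.
by rewrite mulr0.
Qed.

Lemma bessel (R : realType) (V : lmodType R[i]) (ip : V -> V -> R[i]) :
  is_inner_product ip -> forall N (f : 'I_N -> V),
  (forall i j, ip (f i) (f j) = (i == j)%:R) ->
  forall x, \sum_(i < N) `|ip x (f i)| ^+ 2 <= ip x x.
Proof.
move=> H N f Hf x; case: (H) => _ Hc Hpos _.
set c := fun i => ip x (f i).
set y := x - \sum_(i < N) c i *: f i.
have Hy : forall j, ip y (f j) = 0.
  move=> j; rewrite /y (ipBl H) (ip_suml H).
  rewrite (bigD1 j) //= Hf eqxx mulr1 big1 ?addr0 ?subrr // => i /negbTE hij.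
  by rewrite Hf hij mulr0.
have Hyy : ip y y = ip x x - \sum_(i < N) `|c i| ^+ 2.
  rewrite {2}/y Hc (ipBl H) rmorphB /= -!Hc (ip_sumr H) big1; last first.
    by move=> i _; rewrite Hy mulr0.
  rewrite subr0 /y (ipBl H) (ip_suml H); congr (_ - _); apply: eq_bigr => i _.
  by rewrite normCK Hc.
by rewrite -subr_ge0 -Hyy.
Qed.
Theorem lemma4p1 (R : realType) (V : lmodType R[i]) (ip : V -> V -> R[i])
    (n k : nat) (T Ts : {linear V -> V}) (e : nat -> V) (a : nat -> nat -> R[i]) :
  (1 <= k)%N ->
  is_hilbert ip ->
  is_adjoint ip T Ts ->
  contraction ip T ->
  completely_non_unitary ip T Ts ->
  (forall x, defect ip T Ts x -> defect_adj ip T Ts x) ->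
  (exists d : nat, has_dim (defect_adj ip T Ts) d) ->
  has_dim (defect ip T Ts) n.+1 ->
  has_dim (ominus ip (defect_adj ip T Ts) (defect ip T Ts)) k ->
  is_onb ip e ->
  (forall j : nat, (j <= n)%N -> T (e j) = \sum_(i < n + k + 1) a i j *: e i) ->
  (forall j : nat, (n < j)%N -> T (e j) = e (j + k)%N) ->
  let A1 : 'M[R[i]]_n.+1 := \matrix_(i < n.+1, j < n.+1) a i j in
  (~ has_nonzero_eigenvalue T <->
   forall (lambda : R[i]) (h : 'cV[R[i]]_n.+1),
     lambda != 0 -> h != 0 -> A1 *m h = lambda *: h ->
     exists l : nat, (1 <= l <= k)%N /\ \sum_(r < n.+1) a (n + l)%N r * h r ord0 != 0).
Proof.
move=> hk [H _] Hadj Hcontr _ _ _ _ _ [Horth Hcomp] HTe1 HTe2 A1.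
case: (H) => _ Hc Hpos Hdef.
split.
- move=> Hne lam h lam0 h0 eig.
  apply: NNPP => Hnl; apply: Hne.
  have Hz : forall l, (1 <= l <= k)%N ->
      \sum_(r < n.+1) a (n + l)%N r * h r ord0 = 0.
    move=> l hl; apply/eqP; apply/negPn/negP => hne; apply: Hnl; by exists l.
  set x := \sum_(j < n.+1) h j ord0 *: e j.
  exists lam, x; split => //.
  + apply/eqP => x0; move/eqP: h0; apply; apply/matrixP => i j.
    rewrite (ord1 j) mxE.
    have := congr1 (ip^~ (e i)) x0; rewrite /= (ip0l H) (ip_suml H).
    under eq_bigr do rewrite Horth.
    by rewrite (sum_delta_ord (fun j => h j ord0)).
  + set G := fun i : nat => \sum_(j < n.+1) a i j * h j ord0.
    have LHS : T x = \sum_(i < n + k + 1) G i *: e i.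
      rewrite /x linear_sum.
      transitivity (\sum_(j < n.+1) \sum_(i < n + k + 1) (h j ord0 * a i j) *: e i).
        apply: eq_bigr => j _; rewrite linearZ /= HTe1; last by rewrite -ltnS.
        rewrite scaler_sumr; apply: eq_bigr => i _; exact: scalerA.
      rewrite exchange_big; apply: eq_bigr => i _.
      rewrite /G scaler_suml; apply: eq_bigr => j _.
      by rewrite mulrC.
    have RHS : lam *: x = \sum_(i < n.+1) G i *: e i.
      rewrite /x scaler_sumr; apply: eq_bigr => i _.
      rewrite scalerA; congr (_ *: _).
      have := congr1 (fun M : 'M[R[i]]_(n.+1, 1) => M i ord0) eig; rewrite !mxE => <-.
      by rewrite /G; apply: eq_bigr => j _; rewrite /A1 mxE.
    rewrite LHS RHS.
    rewrite -(big_mkord xpredT (fun i => G i *: e i)).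
    rewrite -(big_mkord xpredT (fun i => G i *: e i)).
    have hle : (n.+1 <= n + k + 1)%N by rewrite addn1 ltnS leq_addr.
    rewrite (@big_cat_nat _ _ _ n.+1 0 (n + k + 1)) //.
    have -> : \sum_(n.+1 <= i < n + k + 1) G i *: e i = 0; last exact: addr0.
    rewrite big_nat_cond big1 // => i /andP[/andP[hi1 hi2] _].
    have hni : (n <= i)%N by apply: ltnW.
    have := Hz (i - n)%N; rewrite subnKC //.
    rewrite /G => ->; first by rewrite scale0r.
    apply/andP; split; first by rewrite subn_gt0.
    by rewrite leq_subLR -ltnS -[(n + k).+1]addn1.
- move=> HR [lam [x [lam0 x0 Tx]]].
  set c := fun m => ip x (e m).
  have TsE1 : forall i, (n + k + 1 <= i)%N -> Ts (e i) = e (i - k)%N.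
    move=> i hi; apply/eqP; rewrite -subr_eq0; apply/eqP; apply: Hcomp => m.
    rewrite (ipBl H) Hc -Hadj Horth.
    case: (leqP m n) => hm.
      rewrite HTe1 // (ip_suml H); under eq_bigr do rewrite Horth.
      rewrite (sum_delta_out (fun j => a j m)) //.
      have /negbTE -> : (i - k)%N != m by apply/eqP; clear -hi hm; lia.
      by rewrite rmorph0 subrr.
    rewrite HTe2 // Horth conjC_nat.
    have -> : ((m + k)%N == i) = ((i - k)%N == m) by apply/eqP/eqP; clear -hi hm; lia.
    by rewrite subrr.
  have TsE2 : forall i, (i < n + k + 1)%N ->
      Ts (e i) = \sum_(j < n.+1) (a i j)^* *: e j.
    move=> i hi; apply/eqP; rewrite -subr_eq0; apply/eqP; apply: Hcomp => m.
    rewrite (ipBl H) Hc -Hadj (ip_suml H).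
    under eq_bigr do rewrite Horth.
    case: (leqP m n) => hm.
      rewrite HTe1 // (ip_suml H).
      rewrite -ltnS in hm.
      rewrite (sum_delta_ord (fun j : 'I_n.+1 => (a i j)^*) (Ordinal hm)) /=.
      under eq_bigr do rewrite Horth.
      by rewrite (sum_delta_ord (fun j => a j m) (Ordinal hi)) /= subrr.
    rewrite HTe2 // Horth conjC_nat.
    have /negbTE -> : ((m + k)%N != i) by apply/eqP; clear -hi hm; lia.
    by rewrite (sum_delta_out (fun j : 'I_n.+1 => (a i j)^*)) // subrr.
  have HTxe : forall i, ip (T x) (e i) = lam * c i by move=> i; rewrite Tx (ipZl H).
  have Hsmall : forall i, (i < n + k + 1)%N ->
      ip (T x) (e i) = \sum_(j < n.+1) a i j * c j.
    move=> i hi; rewrite Hadj TsE2 // (ip_sumr H); apply: eq_bigr => j _.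
    by rewrite conjCK.
  have Hrec : forall m, (n < m)%N -> c m = lam * c (m + k)%N.
    move=> m hm; rewrite -HTxe Hadj TsE1 ?addnK //; clear -hm; lia.
  have xx0 : 0 < ip x x.
    rewrite lt_def Hpos andbT; apply/eqP => /Hdef; exact/eqP.
  have Hlam : `|lam| <= 1.
    have := Hcontr x; rewrite /hnorm Tx (ipZl H) (ipZr H) ler_sqrtC; last first.
    - by rewrite qualifE /= Hpos.
    - by rewrite qualifE /= mulrA -normCK mulr_ge0 ?exprn_ge0 ?Hpos.
    rewrite mulrA -normCK ger_pMl //.
    by rewrite -{1}(expr1n _ 2) (ler_pXn2r _ (normr_ge0 _)) ?qualifE /= ?ler01.
  have Htail : forall m, (n < m)%N -> c m = 0.
    move=> m hm; apply/eqP; apply/negPn/negP => cm0.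
    have Hpow : forall j, c m = lam ^+ j * c (m + j * k)%N.
      elim=> [|j IH]; first by rewrite mul0n addn0 expr0 mul1r.
      rewrite IH (Hrec (m + j * k)%N); last by apply: leq_trans hm (leq_addr _ _).
      by rewrite mulrA -exprSr mulSnr addnA.
    have Hge : forall j, `|c m| <= `|c (m + j * k)%N|.
      move=> j; rewrite {1}(Hpow j) normrM normrX.
      by apply: ler_piMl; [exact: normr_ge0 | exact: exprn_ile1].
    have HN : forall N, `|c m| ^+ 2 *+ N <= ip x x.
      move=> N.
      have HB := @bessel R V ip H N (fun j : 'I_N => e (m + j * k)%N).
      apply: le_trans (HB _ x); last first.
        by move=> i j; rewrite Horth eqn_add2l eqn_pmul2r.
      rewrite -[N in _ *+ N]card_ord -sumr_const; apply: ler_sum => j _.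
      by rewrite !expr2 ler_pM ?normr_ge0 ?Hge.
    set u := `|c m| ^+ 2.
    set w := ip x x.
    have u0 : 0 < u by rewrite exprn_gt0 // normr_gt0.
    have ur : ((complex.Re u)%:C)%C = u by apply: RRe_real; apply: ger0_real; apply: ltW.
    have wr : ((complex.Re w)%:C)%C = w by apply: RRe_real; apply: ger0_real; exact: Hpos.
    have Ru0 : 0 < complex.Re u.
      by move: u0; rewrite -ur -ltcR rmorph0.
    have Rw0 : 0 <= complex.Re w.
      by move: (Hpos x); rewrite -/w -wr -lecR rmorph0.
    have := HN (Num.Def.archi_bound (complex.Re w / complex.Re u)).
    rewrite -/u -/w -ur -wr.
    have -> : forall (y : R) N, (y%:C)%C *+ N = ((y *+ N)%:C)%C.
      move=> y; elim=> [|N IH]; first by rewrite !mulr0n.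
      by rewrite !mulrS IH rmorphD.
    rewrite lecR.
    have := archi_boundP (divr_ge0 Rw0 (ltW Ru0)).
    rewrite ltr_pdivrMr // mulr_natl => lt1 le1.
    by move: (lt_le_trans lt1 le1); rewrite ltxx.
  pose h : 'cV[R[i]]_n.+1 := \col_(j < n.+1) c j.
  have h0 : h != 0.
    apply/eqP => /matrixP h0; move/eqP: x0; apply; apply: Hcomp => m.
    case: (leqP m n) => hm; last exact: Htail.
    rewrite -ltnS in hm; have := h0 (Ordinal hm) ord0; by rewrite !mxE.
  have eig : A1 *m h = lam *: h.
    apply/matrixP => i j; rewrite (ord1 j) !mxE -HTxe Hsmall; last first.
      by apply: leq_trans (ltn_ord i) _; rewrite addn1 ltnS leq_addr.
    by apply: eq_bigr => l _; rewrite /A1 /h !mxE.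
  have [l [hl hne]] := HR lam h lam0 h0 eig.
  move: hne; rewrite (eq_bigr (fun r : 'I_n.+1 => a (n + l)%N r * c r)); last first.
    by move=> r _; rewrite /h mxE.
  case/andP: hl => hl1 hl2.
  rewrite -Hsmall; last by rewrite addn1 ltnS leq_add2l.
  by rewrite HTxe Htail ?mulr0 ?eqxx // -{1}(addn0 n) ltn_add2l.
Qed.
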